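(* Let $h\in\mathcal H$ and $\varphi(\underline{x})=h(x_0,x_1)$ on $X=[0,1]^{\mathbb N_0}$. If $a,b\in\mathrm{m}_h$ and $a\neq b$, then \[h(a,b)-h^*-H_\varphi(a^\infty,b^\infty)>0.\]
   Context: $X=[0,1]^{\mathbb N_0}$ with metric $d_X(\underline{x},\underline{y})=\sum_{i\ge0}|x_i-y_i|/2^{i+1}$ and shift $\sigma(\underline{x})_i=x_{i+1}$. $\alpha_\varphi=\inf_\mu\int\varphi\,d\mu$ over $\sigma$-invariant Borel probability measures (in this setting $\alpha_\varphi=h^*$). $B(\underline{x},\underline{y},n;\varepsilon)=\{\underline{z}: d_X(\underline{x},\underline{z})<\varepsilon,\ d_X(\sigma^n\underline{z},\underline{y})<\varepsilon\}$; Peierls barrier $H_\varphi(\underline{x},\underline{y})=\lim_{\varepsilon\to0}\liminf_{n\to\infty}\inf\{\sum_{i=0}^{n-1}(\varphi(\sigma^i\underline{z})-\alpha_\varphi): \underline{z}\in B(\underline{x},\underline{y},n;\varepsilon)\}$. $h^*=\min_x h(x,x)$, $\mathrm{m}_h=\{a: h(a,a)=h^*\}$, $a^\infty=aaa\ldots$. A finite sequence $(x_k,\dots,x_l)$ is minimal (for $h$) if $\sum_{i=k}^{l-1}h(x_i,x_{i+1})\le\sum_{i=k}^{l-1}h(y_i,y_{i+1})$ for every $(y_k,\dots,y_l)$ in $[0,1]$ with the same endpoints. $\mathcal H$ is the set of Lipschitz $h:[0,1]^2\to\mathbb R$ such that (H3) if $\xi_1<\xi_2$, $\eta_1<\eta_2$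 then $h(\xi_1,\eta_1)+h(\xi_2,\eta_2)<h(\xi_1,\eta_2)+h(\xi_2,\eta_1)$; and (H4) if $(x_{-1},x_0,x_1)\ne(x'_{-1},x_0,x'_1)$ are both minimal then $(x_{-1}-x'_{-1})(x_1-x'_1)<0$. *)

(* Defs.v *)
From HB Require Import structures.
From mathcomp Require Import all_boot all_order all_algebra.
From mathcomp Require Import all_classical all_reals all_analysis.
Set Implicit Arguments. Unset Strict Implicit. Unset Printing Implicit Defensive.
Import Order.TTheory GRing.Theory Num.Theory.
Import numFieldNormedType.Exports.
Local Open Scope classical_set_scope.
Local Open Scope ring_scope.

Section Defs.
Variable R : realType.

Definition I01 : set R := `[0, 1]%classic.

Definition inX (x : nat -> R) : Prop := forall i, x i \in `[0, 1].

Definition dX (x y : nat -> R) : R :=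
  limn (series (fun i : nat => `|x i - y i| / 2 ^+ i.+1)).

Definition shift (x : nat -> R) : nat -> R := fun i => x i.+1.

Definition cst_seq (a : R) : nat -> R := fun _ => a.

(* h^* = min_{x in [0,1]} h(x,x) (the minimum is attained; we write inf) *)
Definition hstar (h : R -> R -> R) : R := inf [set h x x | x in I01].

Definition mh (h : R -> R -> R) : set R := [set a | a \in `[0, 1] /\ h a a = hstar h].

Definition phi_of (h : R -> R -> R) (x : nat -> R) : R := h (x 0%N) (x 1%N).

Definition minimal (h : R -> R -> R) (x : nat -> R) (k l : nat) : Prop :=
  (forall i, (k <= i <= l)%N -> x i \in `[0, 1]) /\
  forall y : nat -> R, (forall i, (k <= i <= l)%N -> y i \in `[0, 1]) ->
    y k = x k -> y l = x l ->
    \sum_(k <= i < l) h (x i) (x i.+1) <= \sum_(k <= i < l) h (y i) (y i.+1).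

(* a triple (x_{-1}, x_0, x_1), indexed here by 0,1,2 *)
Definition triple (u v w : R) : nat -> R :=
  fun i => if i == 0%N then u else if i == 1%N then v else w.

Definition minimal3 (h : R -> R -> R) (u v w : R) : Prop :=
  minimal h (triple u v w) 0 2.

Definition classH (h : R -> R -> R) : Prop :=
  (exists L : R, forall x y x' y', x \in `[0, 1] -> y \in `[0, 1] ->
      x' \in `[0, 1] -> y' \in `[0, 1] ->
      `|h x y - h x' y'| <= L * (`|x - x'| + `|y - y'|)) /\
  (forall xi1 xi2 eta1 eta2, xi1 \in `[0, 1] -> xi2 \in `[0, 1] ->
      eta1 \in `[0, 1] -> eta2 \in `[0, 1] -> xi1 < xi2 -> eta1 < eta2 ->
      h xi1 eta1 + h xi2 eta2 < h xi1 eta2 + h xi2 eta1) /\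
  (forall u v w u' w', minimal3 h u v w -> minimal3 h u' v w' ->
      (u, w) <> (u', w') -> (u - u') * (w - w') < 0).

(* alpha_phi; in this setting alpha_phi = h^* *)
Definition alpha (h : R -> R -> R) : R := hstar h.

Definition Bset (x y : nat -> R) (n : nat) (eps : R) : set (nat -> R) :=
  [set z | inX z /\ dX x z < eps /\ dX (iter n shift z) y < eps].

Definition Ssum (h : R -> R -> R) (n : nat) (z : nat -> R) : R :=
  \sum_(0 <= i < n) (phi_of h (iter i shift z) - alpha h).

Definition peierls_eps (h : R -> R -> R) (x y : nat -> R) (eps : R) : \bar R :=
  limn_einf (fun n => ereal_inf [set (Ssum h n z)%:E | z in Bset x y n eps]).

Definition peierls (h : R -> R -> R) (x y : nat -> R) : \bar R :=
  lim (peierls_eps h x y eps @[eps --> 0^'+]).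

End Defs.

(* Main.v *)
Set Warnings "-all".
Require Import Defs.
From mathcomp Require Import all_boot all_order all_algebra.
From mathcomp Require Import all_classical all_reals all_analysis.
From mathcomp Require Import lra zify.
Import Order.TTheory GRing.Theory Num.Theory.
Import numFieldNormedType.Exports.
Local Open Scope classical_set_scope.
Local Open Scope ring_scope.

Section Helpers.
Variable R : realType.

Lemma iter_shift n (z : nat -> R) : iter n (@Defs.shift R) z = fun i => z (i + n)%N.
Proof.
elim: n => [|n IH]; first by apply/funext => i; rewrite addn0.
by rewrite iterS IH; apply/funext => i; rewrite /Defs.shift addSnnS.
Qed.

Lemma dX_le k (x y : nat -> R) : inX x -> inX y ->
  (forall i, (i < k)%N -> x i = y i) -> dX x y <= (2^+k)^-1.
Proof.
move=> Hx Hy Hxy.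
set t := fun i : nat => `|x i - y i| / 2 ^+ i.+1.
have t0 : forall i, 0 <= t i by move=> i; rewrite /t divr_ge0 // exprn_ge0.
have tk : forall i, t i <= if (i < k)%N then 0 else (2^+i.+1)^-1.
  move=> i; case: ifPn => ik; first by rewrite /t Hxy // subrr normr0 mul0r.
  rewrite /t ler_pdivrMr ?exprn_gt0 // mulVf ?expf_neq0 //.
  move: (Hx i) (Hy i); rewrite !in_itv /= => /andP[? ?] /andP[? ?].
  rewrite ler_norml; apply/andP; split; lra.
have S : forall m, series t m <= (2^+k)^-1 - (2^+(maxn m k))^-1.
  elim=> [|m IH].
    rewrite /series /= big_geq // max0n subrr //.
  rewrite /series /= in IH *; rewrite big_nat_recr //=.
  have := tk m; case: ltnP => mk.
    rewrite (maxn_idPr mk) (maxn_idPr (ltnW mk)) in IH *; lra.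
  rewrite (maxn_idPl mk) in IH; rewrite (maxn_idPl (leqW mk)).
  rewrite exprS invfM.
  have : 0 < (2 ^+ m)^-1 :> R by rewrite invr_gt0 exprn_gt0.
  lra.
have mono : {homo series t : n m / (n <= m)%N >-> n <= m}.
  apply/nondecreasing_seqP => n; rewrite /series /= big_nat_recr //=.
  by rewrite lerDl.
have ub : forall m, series t m <= (2^+k)^-1.
  move=> m; apply: (le_trans (S m)); rewrite gerBl invr_ge0 exprn_ge0 //.
rewrite /dX -/t; apply: limr_le.
  have hub : has_ubound (range (series t)) by exists (2^+k)^-1 => _ [m _ <-].
  exact: (cvgP _ (@nondecreasing_cvgn R (series t) mono hub)).
by apply: nearW.
Qed.

Lemma sum_dirac n j (A : R) :
  \sum_(0 <= i < n) (if i == j then A else 0) = if (j < n)%N then A else 0.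
Proof.
elim: n => [|n IH]; first by rewrite big_geq.
rewrite big_nat_recr //= IH.
case: (ltngtP j n) => [jn|jn|->].
- have -> : (j < n.+1)%N by lia.
  by rewrite addr0.
- have -> : (j < n.+1)%N = false by apply/negbTE; lia.
  by rewrite addr0.
- by rewrite ltnSn add0r.
Qed.

Lemma construct (h : R -> R -> R) a b c (eps : R) :
  a \in `[0, 1] -> b \in `[0, 1] -> c \in `[0, 1] ->
  h a a = hstar h -> h b b = hstar h -> 0 < eps ->
  exists N, forall n, (N <= n)%N -> exists z,
    Bset (cst_seq a) (cst_seq b) n eps z /\
    Ssum h n z = h a c - hstar h + (h c b - hstar h).
Proof.
move=> a01 b01 c01 haa hbb e0.
pose k := Num.truncn (eps^-1).
have k2 : eps^-1 < 2 ^+ k.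
  apply: (lt_le_trans (truncnS_gt _)).
  rewrite -natrX ler_nat; exact: ltn_expl.
have k2' : (2 ^+ k)^-1 < eps.
  rewrite -(invrK eps) ltf_pV2 // ?posrE ?exprn_gt0 ?invr_gt0 //.
pose z := fun i : nat => if (i < k.+1)%N then a else if i == k.+1 then c else b.
exists k.+2 => n kn; exists z; split; last first.
  rewrite /Ssum.
  transitivity (\sum_(0 <= i < n) ((if i == k then h a c - hstar h else 0)
       + (if i == k.+1 then h c b - hstar h else 0))).
    apply: eq_bigr => i _; rewrite iter_shift /phi_of /alpha add0n add1n /z.
    case: (ltngtP i k) => [ik|ik|->].
    - have -> : (i < k.+1)%N by lia.
      have -> : (i.+1 < k.+1)%N by lia.
      have -> : (i == k.+1) = false by apply/negbTE/eqP; lia.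
      by rewrite haa subrr add0r.
    - have -> : (i < k.+1)%N = false by apply/negbTE; lia.
      have -> : (i.+1 < k.+1)%N = false by apply/negbTE; lia.
      case: (eqVneq i k.+1) => [->|ik1].
        by rewrite eqSS (gtn_eqF (ltnSn k)) add0r.
      have -> : (i.+1 == k.+1) = false by apply/negbTE/eqP; lia.
      by rewrite hbb subrr addr0.
    - by rewrite ltnSn ltnn !eqxx (ltn_eqF (ltnSn k)) addr0.
  rewrite big_split /= !sum_dirac.
  have -> : (k < n)%N by lia.
  by have -> : (k.+1 < n)%N by lia.
have zX : inX z by move=> i; rewrite /z; case: ifP => // _; case: ifP.
split; first exact: zX.
have cX : forall d, d \in `[0, 1] -> inX (cst_seq d) by move=> d d01 i.
split.
  apply: le_lt_trans k2'; apply: dX_le => // i ik.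
  by rewrite /z /cst_seq; have -> : (i < k.+1)%N by lia.
apply: le_lt_trans k2'; apply: dX_le => //.
  by move=> i; rewrite iter_shift.
move=> i ik; rewrite iter_shift /z /cst_seq.
have -> : (i + n < k.+1)%N = false by apply/negbTE; lia.
by have -> : (i + n == k.+1) = false by apply/negbTE/eqP; lia.
Qed.

Lemma peps_le (h : R -> R -> R) x y eps (M : R) N :
  (forall n, (N <= n)%N -> exists z, Bset x y n eps z /\ Ssum h n z = M) ->
  (peierls_eps h x y eps <= M%:E)%E.
Proof.
move=> HN; rewrite /peierls_eps limn_einf_lim; apply: lime_le.
  exact: is_cvg_einfs.
apply: nearW => n /=.
have [z [Bz Sz]] := HN (maxn n N) (leq_maxr _ _).
apply: le_trans; first apply: ereal_inf_lbound.
  by exists (maxn n N); first exact: leq_maxl.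
by apply: ereal_inf_lbound; exists z => //; rewrite Sz.
Qed.

Lemma peps_mono (h : R -> R -> R) x y e1 e2 : e1 <= e2 ->
  (peierls_eps h x y e2 <= peierls_eps h x y e1)%E.
Proof.
move=> le12; rewrite /peierls_eps !limn_einf_lim; apply: lee_lim.
- exact: is_cvg_einfs.
- exact: is_cvg_einfs.
apply: nearW => n /=.
apply: le_ereal_inf_tmp => _ [k kn <-].
apply: le_trans; first by apply: ereal_inf_lbound; exists k.
apply: ereal_inf_le_tmp => _ [z [zX [z1 z2]] <-]; exists z => //.
by split=> //; split; apply: lt_le_trans le12.
Qed.

Lemma peierls_le (h : R -> R -> R) x y (M : R) :
  (forall eps, 0 < eps -> exists N, forall n, (N <= n)%N ->
     exists z, Bset x y n eps z /\ Ssum h n z = M) ->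
  (peierls h x y <= M%:E)%E.
Proof.
move=> H; rewrite /peierls; apply: lime_le.
  apply: nonincreasing_at_right_is_cvge; apply: nearW => e.
  by move=> e1 e2 _ _ le12; exact: peps_mono.
near=> e.
have e0 : 0 < e by near: e; exact: nbhs_right_gt.
have [N HN] := H e e0; exact: peps_le HN.
Unshelve. all: by end_near.
Qed.
End Helpers.

Theorem lemma3p6 (R : realType) (h : R -> R -> R) (a b : R) :
  classH h -> mh h a -> mh h b -> a <> b ->
  (0 < (h a b - hstar h)%:E - peierls h (cst_seq a) (cst_seq b))%E.
Proof.
move=> [[L HL] [H3 H4]] [a01 haa] [b01 hbb] ab.
have lb : forall y, y \in `[0, 1] -> hstar h <= h y y.
  move=> y y01; rewrite /hstar; apply: ge_inf; last by exists y.
  exists (h 0 0 - `|L| * 2) => _ [x x01 <-].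
  have x01' : x \in `[0, 1] by [].
  have z01 : (0:R) \in `[0, 1] by rewrite in_itv /= lexx ler01.
  have := HL x x 0 0 x01' x01' z01 z01.
  move: x01'; rewrite in_itv /= => /andP[x0 x1].
  rewrite subr0 (ger0_norm x0) ler_norml => /andP[H _].
  have LL : L <= `|L| := ler_norm L.
  have L0 : 0 <= `|L| := normr_ge0 L.
  nra.
have [[c [c01 hc]]|nc] :=
    pselect (exists c, c \in `[0, 1] /\ h a c + h c b < h a a + h a b).
  have Hle : (peierls h (cst_seq a) (cst_seq b) <=
              (h a c - hstar h + (h c b - hstar h))%:E)%E.
    apply: peierls_le => eps e0.
    exact: construct.
  move: Hle; case: (peierls h (cst_seq a) (cst_seq b)) => [p| |] //=.
    rewrite lee_fin => Hp; rewrite -EFinB lte_fin; lra.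
  by move=> _; rewrite addey ?ltry.
exfalso.
have sum2 : forall (x : nat -> R), \sum_(0 <= i < 2) h (x i) (x i.+1) = h (x 0%N) (x 1%N) + h (x 1%N) (x 2%N).
  by move=> x; rewrite !big_nat_recr //= big_geq // add0r.
have m1 : minimal3 h a a b.
  split; first by move=> [|[|[|i]]].
  move=> y Hy y0 y2; rewrite !sum2 /= y0 y2.
  rewrite leNgt; apply/negP => lt; apply: nc; exists (y 1%N); split => //.
  exact: Hy.
have m2 : minimal3 h a a a.
  split; first by move=> [|[|[|i]]].
  move=> y Hy y0 y2; rewrite !sum2 /= y0 y2.
  have y01 : y 1%N \in `[0, 1] by exact: Hy.
  have := lb _ y01; rewrite -haa => hy.
  case: (ltgtP (y 1%N) a) => [ya|ya|->]; last by [].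
  - have := H3 _ _ _ _ y01 a01 y01 a01 ya ya; lra.
  - have := H3 _ _ _ _ a01 y01 a01 y01 ya ya; lra.
have := H4 _ _ _ _ _ m1 m2.
have : (a, b) <> (a, a) by case=> /esym.
move=> /[swap] /[apply]; rewrite subrr mul0r ltxx.
done.
Qed.
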